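(* Let $T$ be an $n$-taxon tree and $\widetilde\phi_T:\mathbb C^N\to\mathbb C^{\kappa^n}$ a polynomial parameterization map of a phylogenetic model $\mathcal M$ on $T$, with homogeneous phylogenetic ideal $\widetilde J_T$. Let $\phi_T:\mathbb C^N\times\mathbb C^\kappa\to\mathbb C^{\kappa^n}$ be the parameterization of the $\mathcal M$+I model, $$\phi_T(\mathbf s,(\delta,\pi_I))=(1-\delta)\widetilde\phi_T(\mathbf s)+\delta\,\mathrm{diag}(\pi_I),$$ with homogeneous phylogenetic ideal $J_T$. Let $P_{eq}=\{p_{ii\dots i}: i\in\{1,\dots,\kappa\}\}$ and let $P'$ be the set of all other indeterminates $p_{i_1\dots i_n}$. Then $$J_T=\left(\widetilde J_T\cap\mathbb C[P']\right)\mathbb C[P],$$ i.e. $J_T$ is generated by the elements of $\widetilde J_T$ not involving the variables in $P_{eq}$.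
   Context: $\mathbb C[P]$ is the polynomial ring in the $\kappa^n$ indeterminates $p_{i_1\dots i_n}$, $i_k\in\{1,\dots,\kappa\}$, and $\mathbb C[P']$ is its subring in the indeterminates of $P'$. Here $(\delta,\pi_I)\in\mathbb C\times\mathbb C^{\kappa-1}$ are the remaining coordinates of $\mathbb C^\kappa$ (the class size $\delta$ and the invariable-site state distribution $\pi_I$, a vector in $\mathbb C^\kappa$ whose entries sum to 1), and $\mathrm{diag}(\pi_I)$ is the $\kappa\times\dots\times\kappa$ array with entry $\pi_I(i)$ at position $(i,\dots,i)$ and zeros elsewhere. For a polynomial parameterization $\psi$ with values in $\mathbb C^{\kappa^n}$, its (affine) phylogenetic ideal is the ideal of all polynomials in $\mathbb C[P]$ vanishing on the image of $\psi$, and its homogeneous phylogenetic ideal is the ideal generated by the homogeneous polynomials in that ideal; equivalently, the ideal of polynomials vanishing on the cone $\{t\,\psi(\mathbf x): t\in\mathbb C\}$ over the image. *)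

(* Defs.v *)
From HB Require Import structures.
From mathcomp Require Import all_boot all_algebra.
From mathcomp Require Import complex.
From mathcomp Require Import Rstruct.
From mathcomp Require Import mpoly.

Set Implicit Arguments.
Unset Strict Implicit.
Unset Printing Implicit Defensive.

Import GRing.Theory.
Local Open Scope ring_scope.

Definition CC : numClosedFieldType := complex Rdefinitions.R.

Definition Idx (n kappa : nat) : finType := {ffun 'I_n -> 'I_kappa}.

Definition nvar (n kappa : nat) : nat := #|Idx n kappa|.

(* C[P] : polynomial ring in the indeterminates p_x, x in Idx n kappa;
   the indeterminate p_x is 'X_(enum_rank x). *)
Definition CP (n kappa : nat) := {mpoly CC[nvar n kappa]}.

Definition evalP (n kappa : nat) (p : CP n kappa) (v : Idx n kappa -> CC) : CC :=
  p.@[fun j => v (enum_val j)].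

Definition diag_idx (n kappa : nat) (i : 'I_kappa) : Idx n kappa := [ffun=> i].

Definition in_CP' (n kappa : nat) (p : CP n kappa) : Prop :=
  forall m, m \in msupp p -> forall i : 'I_kappa, m (enum_rank (diag_idx n i)) = 0%N.

Definition vanishing_ideal (n kappa : nat) (D : Type) (psi : D -> Idx n kappa -> CC)
  : CP n kappa -> Prop :=
  fun p => forall x : D, evalP p (psi x) = 0.

Definition gen_ideal (n kappa : nat) (S : CP n kappa -> Prop) : CP n kappa -> Prop :=
  fun p => exists s : seq (CP n kappa * CP n kappa),
    (forall q, q \in s -> S q.2) /\ p = \sum_(q <- s) q.1 * q.2.

Definition hom_phylo_ideal (n kappa : nat) (D : Type) (psi : D -> Idx n kappa -> CC)
  : CP n kappa -> Prop :=
  gen_ideal (fun p => (exists d : nat, p \is d.-homog) /\ vanishing_ideal psi p).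

Definition poly_param (n kappa N : nat) (f : Idx n kappa -> {mpoly CC[N]})
  : ('I_N -> CC) -> Idx n kappa -> CC :=
  fun s x => (f x).@[s].

Definition diag_array (n kappa : nat) (pi : 'I_kappa -> CC) : Idx n kappa -> CC :=
  fun x => \sum_(i < kappa) (if x == diag_idx n i then pi i else 0).

Definition InvParam (kappa : nat) : Type :=
  { dp : CC * ('I_kappa -> CC) | \sum_(i < kappa) dp.2 i = 1 }.

Definition plusI_param (n kappa N : nat) (phit : ('I_N -> CC) -> Idx n kappa -> CC)
  : ('I_N -> CC) * InvParam kappa -> Idx n kappa -> CC :=
  fun sd x => let s := sd.1 in let delta := (sval sd.2).1 in let pi := (sval sd.2).2 in
    (1 - delta) * phit s x + delta * diag_array pi x.

(* Main.v *)
Require Import Defs.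
From HB Require Import structures.
From mathcomp Require Import all_boot all_algebra.
From mathcomp Require Import complex.
From mathcomp Require Import Rstruct.
From mathcomp Require Import mpoly.
From mathcomp Require Import zify ring.
Import GRing.Theory Num.Theory.
Local Open Scope ring_scope.
Lemma poly_all_roots (P : {poly CC}) : (forall t, P.[t] = 0) -> P = 0.
Proof.
move=> H; apply/eqP; apply/negPn/negP => nz.
have Hall : all (root P) [seq i%:R | i <- iota 0 (size P)].
  by apply/allP => x _; apply/rootP; exact: H.
have Hu : uniq [seq i%:R : CC | i <- iota 0 (size P)].
  rewrite map_inj_uniq ?iota_uniq // => i j /eqP; rewrite eqr_nat => /eqP //.
have := max_poly_roots nz Hall Hu.
by rewrite size_map size_iota ltnn.
Qed.

Lemma homog_scale k (p : {mpoly CC[k]}) d (t : CC) (v : 'I_k -> CC) :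
  p \is d.-homog -> p.@[fun j => t * v j] = t ^+ d * p.@[v].
Proof.
move=> hp; rewrite !mevalE mulr_sumr; apply: eq_big_seq => m hm.
have := dhomog_mf hp hm => /= hd.
under eq_bigr do rewrite exprMn.
rewrite big_split /= prodrXr -mdegE hd mulrCA //.
Qed.

Lemma low_digits (a : nat -> nat) D k : (forall i, a i < D)%N ->
  (\sum_(i < k) a i * D ^ i < D ^ k)%N.
Proof.
move=> ha; elim: k => [|k IH]; first by rewrite big_ord0 expn0.
rewrite big_ord_recr /= expnS.
have h1 : ((a k).+1 * D ^ k <= D * D ^ k)%N by rewrite leq_mul2r ha orbT.
move: IH h1; set S := (\sum_(i < k) _)%N; set X := (D ^ k)%N; set y := a k.
rewrite mulSn => IH h1.
rewrite addnC; apply: leq_trans h1; rewrite [(X + _)%N]addnC -addnS leq_add2l //.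
Qed.

Lemma digits_inj (a b : nat -> nat) D k : (forall i, a i < D)%N -> (forall i, b i < D)%N ->
  (\sum_(i < k) a i * D ^ i = \sum_(i < k) b i * D ^ i)%N -> forall i, (i < k)%N -> a i = b i.
Proof.
move=> ha hb; elim: k => [|k IH] //.
rewrite !big_ord_recr /= => E.
have hD : (0 < D ^ k)%N by rewrite expn_gt0; have := ha 0%N; case: D {ha hb E IH} => //.
have la := low_digits a D k ha; have lb := low_digits b D k hb.
have E1 : a k = b k.
  have := congr1 (fun x => x %/ D ^ k)%N E => /=.
  by rewrite !(addnC (\sum_(_ < _) _)%N) !divnMDl // !divn_small // !addn0.
have E2 : (\sum_(i < k) a i * D ^ i = \sum_(i < k) b i * D ^ i)%N.
  have := congr1 (fun x => x %% D ^ k)%N E => /=.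
  by rewrite !(addnC (\sum_(_ < _) _)%N) !modnMDl !modn_small.
move=> i; rewrite ltnS leq_eqVlt => /orP[/eqP -> //|]; exact: IH.
Qed.
Lemma mpoly_eval_eq0 k (G : {mpoly CC[k]}) : (forall v, G.@[v] = 0) -> G = 0.
Proof.
move=> H.
pose D := (msize G).+1.
pose enc (m : 'X_{1..k}) := (\sum_(i < k) m i * D ^ i)%N.
pose a (m : 'X_{1..k}) j := nth 0%N m j.
have bound : forall m, m \in msupp G -> forall j, (a m j < D)%N.
  move=> m hm j; rewrite /a; case: (ltnP j (size m)) => hj; last first.
    by rewrite nth_default.
  have hjk : (j < k)%N by move: hj; rewrite size_tuple.
  have -> : nth 0%N m j = m (Ordinal hjk) by rewrite mnm_tnth (tnth_nth 0%N).
  apply: (@leq_ltn_trans (mdeg m)); last first.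
    by apply: (leq_trans (msize_mdeg_lt hm)).
  by rewrite mdegE (bigD1 (Ordinal hjk)) //= leq_addr.
have encE m : enc m = (\sum_(i < k) a m i * D ^ i)%N.
  by apply: eq_bigr => i _; rewrite mnm_tnth (tnth_nth 0%N).
have inj : forall m1 m2, m1 \in msupp G -> m2 \in msupp G -> enc m1 = enc m2 -> m1 = m2.
  move=> m1 m2 h1 h2; rewrite !encE => E; apply/mnmP => i.
  have := digits_inj (a m1) (a m2) D k (bound _ h1) (bound _ h2) E i (ltn_ord i).
  by rewrite /a !mnm_tnth !(tnth_nth 0%N).
pose P := \sum_(m <- msupp G) G@_m *: ('X^(enc m) : {poly CC}).
have P0 : P = 0.
  apply: poly_all_roots => t; rewrite horner_sum.
  transitivity G.@[fun i => t ^+ (D ^ i)]; last exact: H.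
  rewrite mevalE; apply: eq_bigr => m _; rewrite hornerZ hornerXn; congr (_ * _).
  rewrite /enc -prodrXr; apply: eq_bigr => i _; rewrite -exprM mulnC //.
apply/mpolyP => m; rewrite mcoeff0.
case: (boolP (m \in msupp G)) => hm; last by rewrite memN_msupp_eq0.
have := congr1 (fun p : {poly CC} => p`_(enc m)) P0; rewrite coef0 coef_sum => <-.
rewrite (big_rem m hm) /= coefZ coefXn eqxx mulr1 big1_seq ?addr0 // => m' /andP[_ hm'].
move: hm'; rewrite mem_rem_uniq ?msupp_uniq // inE => /andP[ne hm'].
rewrite coefZ coefXn; case: eqP => [E|]; last by rewrite mulr0.
by move: ne; rewrite (inj _ _ hm hm' E) eqxx.
Qed.
Section Ideals.
Variables (n kappa : nat).
Implicit Types (S T : CP n kappa -> Prop).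

Lemma gen_ideal0 S : gen_ideal S 0.
Proof. by exists [::]; split => //; rewrite big_nil. Qed.

Lemma gen_ideal_gen S g : S g -> gen_ideal S g.
Proof.
move=> hg; exists [:: (1, g)]; split; first by move=> q; rewrite inE => /eqP ->.
by rewrite big_seq1 mul1r.
Qed.

Lemma gen_idealD S p q : gen_ideal S p -> gen_ideal S q -> gen_ideal S (p + q).
Proof.
case=> s1 [h1 ->] [s2 [h2 ->]]; exists (s1 ++ s2); split; last by rewrite big_cat.
by move=> r; rewrite mem_cat => /orP[/h1|/h2].
Qed.

Lemma gen_idealM S a p : gen_ideal S p -> gen_ideal S (a * p).
Proof.
case=> s [h ->]; exists [seq (a * q.1, q.2) | q <- s]; split.
  by move=> q /mapP [q' hq' ->] /=; exact: h.
by rewrite big_map mulr_sumr; apply: eq_bigr => q _ /=; rewrite mulrA.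
Qed.

Lemma gen_ideal_sum S (I : eqType) (r : seq I) (F : I -> CP n kappa) :
  (forall i, i \in r -> gen_ideal S (F i)) -> gen_ideal S (\sum_(i <- r) F i).
Proof.
elim: r => [|i r IH] H; first by rewrite big_nil; exact: gen_ideal0.
rewrite big_cons; apply: gen_idealD; first by apply: H; rewrite inE eqxx.
by apply: IH => j hj; apply: H; rewrite inE hj orbT.
Qed.

Lemma gen_ideal_mono S T p : (forall q, S q -> gen_ideal T q) -> gen_ideal S p -> gen_ideal T p.
Proof.
move=> ST [s [h ->]]; apply: gen_ideal_sum => q hq.
by apply: gen_idealM; apply: ST; apply: h.
Qed.
End Ideals.
Definition rk n kappa (i : 'I_kappa) : 'I_(nvar n kappa) := enum_rank (diag_idx n i).
Arguments rk n {kappa} i.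
Definition isd n kappa (j : 'I_(nvar n kappa)) : bool := [exists i, j == rk n i].
Arguments isd {n kappa} j.

Lemma diag_idx_inj n kappa : (0 < n)%N -> injective (@diag_idx n kappa).
Proof.
move=> hn i j E; have := congr1 (fun x : Idx n kappa => x (Ordinal hn)) E.
by rewrite /diag_idx !ffunE.
Qed.

Arguments diag_idx_inj {n kappa}.

Lemma rk_inj n kappa : (0 < n)%N -> injective (@rk n kappa).
Proof. by move=> hn i j /enum_rank_inj /(diag_idx_inj hn). Qed.

Arguments rk_inj {n kappa}.

Lemma isd_rk n kappa (i : 'I_kappa) : isd (rk n i).
Proof. by apply/existsP; exists i. Qed.

Lemma enum_val_rk n kappa (i : 'I_kappa) : enum_val (rk n i) = diag_idx n i.
Proof. by rewrite /rk enum_rankK. Qed.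

Lemma diag_array_off n kappa (pi : 'I_kappa -> CC) (j : 'I_(nvar n kappa)) :
  ~~ isd j -> diag_array pi (enum_val j) = 0.
Proof.
move=> hj; apply: big1 => i _; case: eqP => // E; exfalso; apply: (negP hj).
by apply/existsP; exists i; rewrite /rk -E enum_valK.
Qed.

Lemma diag_array_on n kappa (hn : (0 < n)%N) (pi : 'I_kappa -> CC) (i : 'I_kappa) :
  diag_array pi (enum_val (rk n i)) = pi i.
Proof.
rewrite enum_val_rk /diag_array (bigD1 i) //= eqxx big1 ?addr0 // => k nek.
by case: eqP => // /(diag_idx_inj hn) E; move: nek; rewrite E eqxx.
Qed.

Lemma in_CP'_eval n kappa (p : CP n kappa) (v w : 'I_(nvar n kappa) -> CC) :
  in_CP' p -> (forall j, ~~ isd j -> v j = w j) -> p.@[v] = p.@[w].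
Proof.
move=> H E; rewrite !mevalE; apply: eq_big_seq => m hm; congr (_ * _).
apply: eq_bigr => j _; case: (boolP (isd j)) => hj; last by rewrite E.
by case/existsP: hj => i /eqP ->; rewrite (H m hm i) !expr0.
Qed.

Lemma hom_cone n kappa (D : Type) (psi : D -> Idx n kappa -> CC) (q : CP n kappa) :
  hom_phylo_ideal psi q -> forall x t, q.@[fun j => t * psi x (enum_val j)] = 0.
Proof.
case=> s [Hs ->] x t; rewrite raddf_sum big1_seq // => g hg /=; rewrite mevalM.
move: hg => /andP[_ hg]; case: (Hs g hg) => [[d hd] hv].
have := homog_scale _ _ _ t (fun j => psi x (enum_val j)) hd => /= ->.
by have := hv x; rewrite /evalP => ->; rewrite !mulr0.
Qed.

Lemma comp_vanish k (q : {mpoly CC[k]}) (y : 'I_k -> CC) :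
  (forall t, q.@[fun j => t * y j] = 0) -> forall d, (pihomog mdeg d q).@[y] = 0.
Proof.
move=> H d.
pose K := msize q.
have E t : q.@[fun j => t * y j] = \sum_(e < K) (pihomog mdeg e q).@[y] * t ^+ e.
  rewrite {1}(@pihomog_partitionE _ _ mdeg K q (leqnn _)) raddf_sum.
  by apply: eq_bigr => e _ /=; rewrite (homog_scale _ _ e) ?pihomogP // mulrC.
pose P := \poly_(e < K) (pihomog mdeg e q).@[y].
have P0 : P = 0 by apply: poly_all_roots => t; rewrite horner_poly -E H.
case: (ltnP d K) => hd.
  by have := congr1 (fun p : {poly CC} => p`_d) P0; rewrite coef_poly hd coef0.
rewrite pihomogE big_seq_cond big_pred0 ?meval0 // => m.
apply/negbTE/negP => /andP[hm /eqP hmd].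
by have := msize_mdeg_lt hm; rewrite hmd ltnNge hd.
Qed.

Lemma msupp_pihomog k (q : {mpoly CC[k]}) d m :
  m \in msupp (pihomog mdeg d q) -> m \in msupp q.
Proof.
rewrite !mcoeff_msupp; apply: contra => /eqP h0.
rewrite pihomogE raddf_sum big1_seq // => m' _ /=.
by rewrite mcoeffZ mcoeffX; case: eqP => [->|]; rewrite ?h0 ?mul0r ?mulr0.
Qed.
Lemma supset_gen n kappa N (f : Idx n kappa -> {mpoly CC[N]}) (q : CP n kappa) :
  hom_phylo_ideal (poly_param f) q -> in_CP' q ->
  hom_phylo_ideal (plusI_param (poly_param f)) q.
Proof.
move=> hq hc.
have hcone := hom_cone _ _ _ _ _ hq.
rewrite {1}(@pihomog_partitionE _ _ mdeg (msize q) q (leqnn _)).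
apply: gen_ideal_sum => d _; apply: gen_ideal_gen; split.
  by exists d; exact: pihomogP.
move=> [s [[delta pi] hpi]]; rewrite /evalP.
have hcc : in_CP' (pihomog mdeg d q).
  by move=> m /msupp_pihomog hm; exact: hc m hm.
rewrite (in_CP'_eval _ _ _ _ (fun j => (1 - delta) * poly_param f s (enum_val j)) hcc).
  rewrite (homog_scale _ _ d) ?pihomogP //.
  by rewrite (comp_vanish _ _ (fun j => poly_param f s (enum_val j)) (hcone s)) mulr0.
by move=> j hj; rewrite /plusI_param /= diag_array_off // mulr0 addr0.
Qed.
Section Decomp.
Variables (n kappa : nat).
Local Notation nv := (nvar n kappa).

Definition dpart (m : 'X_{1..nv}) : 'X_{1..nv} :=
  [multinom (if isd j then m j else 0%N) | j < nv].
Definition opart (m : 'X_{1..nv}) : 'X_{1..nv} :=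
  [multinom (if isd j then 0%N else m j) | j < nv].

Lemma dpart_opart m : (dpart m + opart m)%MM = m.
Proof. by apply/mnmP => j; rewrite mnmDE !mnmE; case: (isd j); rewrite ?addn0. Qed.

Definition cb (g : CP n kappa) (b : 'X_{1..nv}) : CP n kappa :=
  \sum_(m <- msupp g | dpart m == b) g@_m *: 'X_[opart m].

Lemma sum_pick (T : eqType) (V : nmodType) (r : seq T) x (F : T -> V) :
  uniq r -> x \in r -> \sum_(y <- r) (if x == y then F y else 0) = F x.
Proof.
move=> ur xr; rewrite (big_rem x) //= eqxx big1_seq ?addr0 // => y /andP[_ hy].
by move: hy; rewrite mem_rem_uniq // inE => /andP[ne _]; rewrite eq_sym (negbTE ne).
Qed.

Lemma decomp (g : CP n kappa) :
  g = \sum_(b <- undup [seq dpart m | m <- msupp g]) 'X_[b] * cb g b.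
Proof.
rewrite {1}[g]mpolyE.
under [RHS]eq_bigr => b _ do rewrite /cb mulr_sumr big_mkcond /=.
rewrite exchange_big /=; apply: eq_big_seq => m hm.
rewrite -[g@_m *: 'X_[m]](@sum_pick _ _ (undup [seq dpart m0 | m0 <- msupp g]) (dpart m) (fun _ => g@_m *: 'X_[m]) (undup_uniq _)).
  apply: eq_bigr => b _; case: eqP => // <-.
  by rewrite -scalerAr -mpolyXD dpart_opart.
by rewrite mem_undup; apply: map_f.
Qed.

Lemma cb_CP' g b : in_CP' (cb g b).
Proof.
move=> m0 hm0 i; apply/eqP; move: hm0; rewrite mcoeff_msupp; apply: contraNT => hne.
apply/eqP; rewrite /cb raddf_sum big1_seq // => m _ /=.
rewrite mcoeffZ mcoeffX; case: eqP => [E|]; last by rewrite mulr0.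
by move: hne; rewrite -E mnmE isd_rk eqxx.
Qed.

Lemma cb_homog g d b : g \is d.-homog -> cb g b \is (d - mdeg b)%N.-homog.
Proof.
move=> hg; rewrite /cb big_seq_cond; apply: rpred_sum => m /andP[hm /eqP hb].
apply: rpredZ; rewrite dhomogX -hb.
have E := congr1 mdeg (dpart_opart m); rewrite mdegD (dhomog_mf hg hm) in E.
by rewrite -E addKn.
Qed.

Definition Gx (g : CP n kappa) (x : 'I_nv -> CC) : {mpoly CC[nv]} :=
  \sum_(m <- msupp g)
     (g@_m * \prod_(j < nv) (if isd j then 1 else x j ^+ m j)) *: 'X_[dpart m].

Lemma Gx_coef g x b : (Gx g x)@_b = (cb g b).@[x].
Proof.
rewrite /Gx /cb !raddf_sum /= [RHS]big_mkcond /=; apply: eq_bigr => m _ /=.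
rewrite mcoeffZ mcoeffX; case: eqP => _; rewrite ?mulr1 ?mulr0 //.
rewrite mevalZ mevalX; congr (_ * _); apply: eq_bigr => j _; rewrite mnmE.
by case: (isd j); rewrite ?expr0.
Qed.

Lemma Gx_eval g x v : (Gx g x).@[v] = g.@[fun j => if isd j then v j else x j].
Proof.
rewrite /Gx raddf_sum mevalE; apply: eq_bigr => m _ /=.
rewrite mevalZ mevalX -mulrA; congr (_ * _); rewrite -big_split.
apply: eq_bigr => j _ /=; rewrite mnmE.
by case: (isd j); rewrite ?mul1r ?expr0 ?mulr1.
Qed.
End Decomp.
Arguments dpart {n kappa} m.
Arguments opart {n kappa} m.
Arguments cb {n kappa} g b.
Arguments decomp {n kappa} g.
Arguments cb_CP' {n kappa} g b.
Arguments cb_homog {n kappa} g d b.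
Arguments Gx {n kappa} g x.
Arguments Gx_coef {n kappa} g x b.
Arguments Gx_eval {n kappa} g x v.
Lemma subset_gen n kappa N (hn : (0 < n)%N) (hk : (0 < kappa)%N)
  (f : Idx n kappa -> {mpoly CC[N]}) (g : CP n kappa) d :
  g \is d.-homog -> vanishing_ideal (plusI_param (poly_param f)) g ->
  gen_ideal (fun q => hom_phylo_ideal (poly_param f) q /\ in_CP' q) g.
Proof.
move=> hg hv.
rewrite (decomp g); apply: gen_ideal_sum => b _; apply: gen_idealM; apply: gen_ideal_gen.
split; last exact: cb_CP'.
apply: gen_ideal_gen; split; first by exists (d - mdeg b)%N; exact: cb_homog.
move=> s; rewrite /evalP.
set x := fun j => poly_param f s (enum_val j).
rewrite -Gx_coef.
suff -> : Gx g x = 0 by rewrite mcoeff0.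
set i0 : 'I_kappa := Ordinal hk.
pose Aq : {mpoly CC[nvar n kappa]} := \sum_(i < kappa) ('X_(rk n i) - (x (rk n i))%:MP).
pose Q := Aq * (1 + Aq).
have AqE v : Aq.@[v] = \sum_(i < kappa) (v (rk n i) - x (rk n i)).
  by rewrite raddf_sum; apply: eq_bigr => i _ /=; rewrite mevalB mevalXU mevalC.
have Aq_coef : Aq@_U_(rk n i0) = 1.
  rewrite raddf_sum (bigD1 i0) //= big1 => [|i ne] /=.
    rewrite mcoeffB mcoeffXU mcoeffC eqxx.
    case: eqP => [/(congr1 mdeg)|_]; first by rewrite mdeg1 mdeg0.
    by rewrite mulr0 subr0 addr0.
  rewrite mcoeffB mcoeffXU mcoeffC.
  case: eqP => [/(rk_inj hn) E|_]; first by move: ne; rewrite E eqxx.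
  case: eqP => [/(congr1 mdeg)|_]; first by rewrite mdeg1 mdeg0.
  by rewrite mulr0 subr0.
have Q_neq0 : Q != 0.
  rewrite mulf_neq0 //; apply/eqP => E.
    by have := congr1 (mcoeff U_(rk n i0)) E; rewrite Aq_coef mcoeff0 => /eqP; rewrite oner_eq0.
  have := congr1 (mcoeff U_(rk n i0)) E; rewrite mcoeffD Aq_coef mcoeff1 mcoeff0.
  case: eqP => [/(congr1 mdeg)|_]; first by rewrite mdeg1 mdeg0.
  by rewrite add0r => /eqP; rewrite oner_eq0.
have hGQ : Gx g x * Q = 0.
  apply: mpoly_eval_eq0 => v; rewrite mevalM /Q mevalM mevalD meval1 AqE.
  set A := \sum_(i < kappa) _.
  have [A0|A0] := eqVneq A 0; first by rewrite A0 !mul0r mulr0.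
  have [A1|A1] := eqVneq (1 + A) 0; first by rewrite A1 !mulr0.
  suff -> : (Gx g x).@[v] = 0 by rewrite mul0r.
  rewrite Gx_eval.
  pose pi := fun i => (v (rk n i) - x (rk n i)) / A.
  have hpi : \sum_(i < kappa) pi i = 1 by rewrite -mulr_suml divff.
  pose sd : ('I_N -> CC) * InvParam kappa := (s, exist _ (A / (1 + A), pi) hpi).
  have := hv sd; rewrite /evalP => H0.
  rewrite (meval_eq (v2 := fun j => (1 + A) * plusI_param (poly_param f) sd (enum_val j))).
    by rewrite (homog_scale _ _ d) // H0 mulr0.
  move=> j /=; rewrite /plusI_param /=; case: (boolP (isd j)) => hj.
    case/existsP: hj => i /eqP ->; rewrite diag_array_on // /pi /x /=.
    by field; rewrite A0 A1.
  rewrite diag_array_off // /x /=.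
  by field; rewrite A1.
by move/eqP: hGQ; rewrite mulf_eq0 (negbTE Q_neq0) orbF => /eqP.
Qed.
Theorem proposition9 (n kappa N : nat) (hn : (0 < n)%N) (hk : (0 < kappa)%N)
  (f : Idx n kappa -> {mpoly CC[N]}) :
  let phit := poly_param f in
  let Jt := hom_phylo_ideal phit in
  let J := hom_phylo_ideal (plusI_param phit) in
  forall p : CP n kappa, J p <-> gen_ideal (fun q => Jt q /\ in_CP' q) p.
Proof.
move=> phit Jt J p; split.
  case=> s [hs ->]; apply: gen_ideal_sum => q hq; apply: gen_idealM.
  case: (hs q hq) => [[d hd] hv].
  exact: (subset_gen _ _ _ hn hk _ _ _ hd hv).
apply: gen_ideal_mono => q [hq hc].
exact: supset_gen.
Qed.
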